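(* Assume Condition (C) and $\lambda/2<h<\lambda$. If $\eta\in\mathcal M_{n^+_c}$ contains a full column (or a full row) of $\Lambda$ on which all spins are $0$, then $\eta$ is not a minimizer of $H$ on $\mathcal M_{n^+_c}$.
   Context: Let $\Lambda=\{1,\dots,L\}^2$, $\mathcal X=\{-1,0,+1\}^\Lambda$, $\partial^-\Lambda$ the sites of $\Lambda$ with a nearest neighbour outside $\Lambda$. Hamiltonian: $H(\eta)=\frac J2\sum_{i,j\in\Lambda,|i-j|=1}[\eta(i)-\eta(j)]^2+J\sum_{i\in\partial^-\Lambda}\sum_{j\notin\Lambda,|i-j|=1}\eta(i)^2-\lambda\sum_{i}\eta(i)^2-h\sum_i\eta(i)$. Condition (C): $J$ sufficiently large compared to $\lambda,h>0$; $L>(2J/(\lambda-h))^3$; none of $\tfrac{2J}{\lambda+h},\tfrac{2J}{\lambda-h},\tfrac{2J+\lambda-h}{\lambda+h},\tfrac{J+\lambda+h}{h}$ is an integer. Let $l_c=\lfloor\frac{2J+\lambda-h}{2h}\rfloor+1$ and $n^+_c=l_c(l_c-1)$. For $n\ge0$, $\mathcal M_n$ is the set of configurations with exactly $n$ sites of spin $+1$. *)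

(* Defs.v *)
From mathcomp Require Import all_boot all_order all_algebra.
From mathcomp Require Import reals.
Set Implicit Arguments. Unset Strict Implicit. Unset Printing Implicit Defensive.
Import Order.TTheory GRing.Theory Num.Theory.
Local Open Scope ring_scope.

(* Lambda = {1,...,L}^2; a site is encoded by a pair of ordinals (a,b)
   standing for the point (a+1, b+1) of Z^2. *)
Definition site (L : nat) := ('I_L * 'I_L)%type.

Definition pos (L : nat) (i : site L) : int * int :=
  ((nat_of_ord i.1)%:Z + 1, (nat_of_ord i.2)%:Z + 1).

Definition inLam (L : nat) (p : int * int) : bool :=
  (1 <= p.1 <= L%:Z) && (1 <= p.2 <= L%:Z).

Definition nbrs (p : int * int) : seq (int * int) :=
  [:: (p.1 + 1, p.2); (p.1 - 1, p.2); (p.1, p.2 + 1); (p.1, p.2 - 1)].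

Definition adj (L : nat) (i j : site L) : bool :=
  (`|(pos i).1 - (pos j).1| + `|(pos i).2 - (pos j).2| == 1).

Definition n_out (L : nat) (i : site L) : nat :=
  count (fun q => ~~ inLam L q) (nbrs (pos i)).

Definition inner_bd (L : nat) (i : site L) : bool := (0 < n_out i)%N.

Definition is_config (L : nat) (eta : site L -> int) : Prop :=
  forall i, eta i \in [:: -1; 0; 1].

Definition Ham (R : realType) (J lam h : R) (L : nat) (eta : site L -> int) : R :=
  J / 2 * (\sum_(i : site L) \sum_(j : site L | adj i j) ((eta i - eta j) ^+ 2)%:~R)
  + J * (\sum_(i : site L | inner_bd i)
           \sum_(q <- nbrs (pos i) | ~~ inLam L q) ((eta i) ^+ 2)%:~R)
  - lam * (\sum_(i : site L) ((eta i) ^+ 2)%:~R)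
  - h * (\sum_(i : site L) (eta i)%:~R).

Definition n_plus (L : nat) (eta : site L -> int) : nat :=
  #|[pred i : site L | eta i == 1]|.

Definition in_M (L : nat) (n : int) (eta : site L -> int) : Prop :=
  is_config eta /\ (n_plus eta)%:Z = n.

Definition is_minimizer (R : realType) (J lam h : R) (L : nat) (n : int)
    (eta : site L -> int) : Prop :=
  in_M n eta /\ forall zeta : site L -> int, in_M n zeta -> Ham J lam h eta <= Ham J lam h zeta.

Definition l_c (R : realType) (J lam h : R) : int :=
  Num.floor ((2 * J + lam - h) / (2 * h)) + 1.

Definition n_c_plus (R : realType) (J lam h : R) : int :=
  l_c J lam h * (l_c J lam h - 1).

(* arithmetic part of Condition (C) (the "J sufficiently large" part is
   expressed by an existential threshold in the statement) *)
Definition cond_C (R : realType) (J lam h : R) (L : nat) : Prop :=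
  [/\ 0 < lam, 0 < h & (2 * J / (lam - h)) ^+ 3 < L%:R] /\
  [/\ ~ ((2 * J / (lam + h)) \is a Num.int),
      ~ ((2 * J / (lam - h)) \is a Num.int),
      ~ ((2 * J + lam - h) / (lam + h) \is a Num.int)
    & ~ ((J + lam + h) / h \is a Num.int)].

Definition has_zero_line (L : nat) (eta : site L -> int) : Prop :=
  (exists c : 'I_L, forall r : 'I_L, eta (r, c) = 0) \/
  (exists r : 'I_L, forall c : 'I_L, eta (r, c) = 0).

(* Main.v *)
Require Import Defs.
From mathcomp Require Import all_boot all_order all_algebra.
From mathcomp Require Import reals.
From mathcomp Require Import zify ring lra.
Import Order.TTheory GRing.Theory Num.Theory.
Set Implicit Arguments. Unset Strict Implicit.
Local Open Scope ring_scope.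

Definition isR L (i j : site L) : bool := (val i.1 == val j.1) && (val j.2 == (val i.2).+1)%N.
Definition isD L (i j : site L) : bool := (val i.2 == val j.2) && (val j.1 == (val i.1).+1)%N.

Lemma adj_split L (i j : site L) : (adj i j : nat) = (isR i j + isR j i + isD i j + isD j i)%N.
Proof.
case: i j => [a b] [c d]; rewrite /adj /isR /isD /pos /=.
move: (val a) (val b) (val c) (val d) => x y z w.
have E : forall p q : nat, (p%:Z + 1 - (q%:Z + 1)) = p%:Z - q%:Z by move=> p q; lia.
rewrite !E.
case: (ltngtP x z) => h1; case: (ltngtP y w) => h2; lia.
Qed.

Section S.
Variable L : nat.
Implicit Types (e : site L -> int).

Definition Aint e : int := \sum_(i : site L) \sum_(j : site L | adj i j) (e i - e j) ^+ 2.
Definition Bint e : int := \sum_(i : site L | inner_bd i)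
           \sum_(q <- nbrs (pos i) | ~~ inLam L q) ((e i) ^+ 2).
Definition Hint e : int := \sum_(i : site L) \sum_(j : site L) (isR i j)%:R * (e i - e j) ^+ 2.
Definition Vint e : int := \sum_(i : site L) \sum_(j : site L) (isD i j)%:R * (e i - e j) ^+ 2.

Lemma A_split e : Aint e = 2 * (Hint e + Vint e).
Proof.
rewrite /Aint.
have -> : \sum_(i : site L) \sum_(j : site L | adj i j) (e i - e j) ^+ 2 =
  \sum_(i : site L) \sum_(j : site L) ((isR i j)%:R * (e i - e j) ^+ 2 + (isR j i)%:R * (e i - e j) ^+ 2
     + ((isD i j)%:R * (e i - e j) ^+ 2 + (isD j i)%:R * (e i - e j) ^+ 2)).
  apply: eq_bigr => i _; rewrite big_mkcond /=; apply: eq_bigr => j _.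
  rewrite -!mulrDl -!natrD addnA.
  by case: (adj i j) (adj_split i j) => /= <-; rewrite ?mul1r ?mul0r.
under eq_bigr do rewrite !big_split /=.
rewrite !big_split /=.
have sym : forall P : site L -> site L -> bool,
  \sum_(i : site L) \sum_(j : site L) (P j i)%:R * (e i - e j) ^+ 2 =
  \sum_(i : site L) \sum_(j : site L) (P i j)%:R * (e i - e j) ^+ 2.
  move=> P; rewrite exchange_big /=; apply: eq_bigr => i _; apply: eq_bigr => j _.
  by congr (_ * _); rewrite -sqrrN opprB.
rewrite (sym (@isR L)) (sym (@isD L)) /Hint /Vint; ring.
Qed.

Lemma nout_eq (i : site L) : n_out i =
  ((val i.1 == 0) + (val i.1 == L.-1) + (val i.2 == 0) + (val i.2 == L.-1))%N.
Proof.
case: i => a b; rewrite /n_out /nbrs /inLam /pos /=.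
have := ltn_ord a; have := ltn_ord b.
move: (val a) (val b) => x y hy hx.
case: (x =P 0%N) => h1; case: (x =P L.-1) => h2; case: (y =P 0%N) => h3; case: (y =P L.-1) => h4 /=; lia.
Qed.

Lemma B_eq e : Bint e = \sum_(i : site L) (n_out i)%:R * e i ^+ 2.
Proof.
rewrite /Bint big_mkcond /=; apply: eq_bigr => i _.
rewrite /inner_bd.
have -> : \sum_(q <- nbrs (pos i) | ~~ inLam L q) e i ^+ 2 = (n_out i)%:R * e i ^+ 2.
  rewrite big_const_seq /n_out; elim: (count _ _) => [|n IH] /=; [by rewrite mul0r | by rewrite IH -[n.+1]addn1 natrD mulrDl mul1r addrC].
case: (n_out i) => [|n] /=; [by rewrite !mul0r | by []].
Qed.
End S.
Lemma sum_site L (G : site L -> int) : \sum_(i : site L) G i = \sum_(a < L) \sum_(b < L) G (a, b).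
Proof. by rewrite pair_big /=; apply: eq_bigr => -[a b]. Qed.

Lemma sum_ind (n m : nat) (H : nat -> int) :
  \sum_(d < n) (d == m :> nat)%:R * H d = (m < n)%:R * H m.
Proof.
elim: n => [|n IH]; first by rewrite big_ord0 mul0r.
rewrite big_ord_recr /= IH.
case: (n =P m) => [->|nm]; first by rewrite ltnn ltnSn mul0r mul1r add0r.
rewrite mul0r addr0.
have -> : (m < n.+1)%N = (m < n)%N by apply/idP/idP; lia.
by [].
Qed.

Lemma sq_ge_abs (z : int) : `|z| <= z ^+ 2.
Proof. rewrite expr2; nia. Qed.

Lemma tele (G : nat -> int) (m n : nat) : (m <= n)%N ->
  `|G m - G n| <= \sum_(m <= k < n) (G k - G k.+1) ^+ 2.
Proof.
elim: n => [|n IH] hmn.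
  have -> : m = 0%N by lia.
  by rewrite big_geq // subrr normr0.
case: (ltngtP m n.+1) => h; last by subst m; rewrite big_geq // subrr normr0.
- rewrite big_nat_recr /=; last by lia.
  have := IH (ltnSE h); have := sq_ge_abs (G n - G n.+1).
move: (\sum_(m <= k < n) _) => S; move: ((G n - G n.+1) ^+ 2) => t; lia.
- lia.
Qed.

Lemma row_lemma L (g : 'I_L -> int) (b0 : 'I_L) : g b0 != 0 ->
  2 <= \sum_(b < L) \sum_(d < L) (val d == (val b).+1)%:R * (g b - g d) ^+ 2
       + \sum_(b < L) ((val b == 0)%N + (val b == L.-1)%N)%:R * g b ^+ 2.
Proof.
move=> nz.
pose G k := if insub k is Some b then g b else 0.
have gG : forall b : 'I_L, g b = G b by move=> b; rewrite /G valK.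
under eq_bigr => b _ do under eq_bigr => d _ do rewrite !gG.
under [X in _ + X]eq_bigr => b _ do rewrite gG natrD mulrDl.
rewrite big_split /=.
under eq_bigr => b _ do rewrite (sum_ind L (val b).+1 (fun d => (G b - G d) ^+ 2)).
rewrite (sum_ind L 0 (fun d => G d ^+ 2)) (sum_ind L L.-1 (fun d => G d ^+ 2)).
rewrite gG in nz.
have hj := ltn_ord b0.
move: nz hj; move: (val b0) => j nz hj.
clearbody G; clear gG b0 g.
case: L hj => [|n] hj //=.
rewrite big_ord_recr /= ltnn mul0r addr0.
under eq_bigr => b _ do rewrite ltnS (ltn_ord b) mul1r.
rewrite -(big_mkord xpredT (fun k => (G k - G k.+1) ^+ 2)).
have hb : (j <= n)%N by lia.
rewrite (big_cat_nat (leq0n j) hb) /=.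
have t1 := tele G (leq0n j); have t2 := tele G hb.
have s1 := sq_ge_abs (G 0%N); have s2 := sq_ge_abs (G n).
rewrite !mul1r.
have : 0 < `|G j| by rewrite normr_gt0.
move: (\sum_(0 <= i < j) _) (\sum_(j <= i < n) _) t1 t2 => S1 S2 t1 t2.
move: (G 0%N ^+ 2) (G n ^+ 2) s1 s2 => q1 q2 s1 s2.
lia.
Qed.

Lemma ind_val n (a : 'I_n) (X : 'I_n -> int) :
  \sum_(c < n) (val a == val c)%:R * X c = X a.
Proof.
rewrite (bigD1 a) //= eqxx mul1r big1 ?addr0 // => c Hc.
by rewrite (_ : (val a == val c) = false) ?mul0r //; apply/negbTE; rewrite val_eqE eq_sym.
Qed.

Lemma card_sum (T : finType) (P : pred T) : (#|P|%:R : int) = \sum_i (P i)%:R.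
Proof.
rewrite -sum1_card natr_sum big_mkcond /=; apply: eq_bigr => i _.
by rewrite unfold_in; case: (P i).
Qed.

Lemma sq_ge0 (z : int) : 0 <= z ^+ 2.
Proof. by rewrite sqr_ge0. Qed.

Section LB.
Variable L : nat.
Variable e : site L -> int.

Lemma Hcost : 2 * (#|[pred a : 'I_L | [exists b, e (a, b) != 0]]|)%:R <=
  Hint e + \sum_(i : site L) ((val i.2 == 0)%N + (val i.2 == L.-1)%N)%:R * e i ^+ 2.
Proof.
rewrite /Hint !sum_site card_sum mulr_sumr -big_split /=.
apply: ler_sum => a _.
under eq_bigr => b _ do (rewrite sum_site; under eq_bigr => c _ do
  (under eq_bigr => d _ do rewrite /isR /= -mulnb natrM -mulrA; rewrite -mulr_sumr)).
under eq_bigr => b _ do rewrite ind_val.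
case: existsP => [[b0 nz]|_].
  rewrite mulr1. exact: (@row_lemma L (fun b => e (a, b)) b0 nz).
rewrite (_ : (false%:R : int) = 0) // mulr0; apply: addr_ge0; apply: sumr_ge0 => b _; first apply: sumr_ge0 => d _;
  apply: mulr_ge0 => //; exact: sq_ge0.
Qed.

Lemma Vcost : 2 * (#|[pred b : 'I_L | [exists a, e (a, b) != 0]]|)%:R <=
  Vint e + \sum_(i : site L) ((val i.1 == 0)%N + (val i.1 == L.-1)%N)%:R * e i ^+ 2.
Proof.
rewrite /Vint !sum_site card_sum mulr_sumr.
rewrite exchange_big [X in _ <= _ + X]exchange_big -big_split /=.
apply: ler_sum => b _.
under eq_bigr => a _ do (rewrite sum_site; under eq_bigr => c _ do
  (under eq_bigr => d _ do rewrite /isD /= -mulnb natrM -mulrA; rewrite ind_val)).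
case: existsP => [[a0 nz]|_].
  rewrite mulr1. exact: (@row_lemma L (fun a => e (a, b)) a0 nz).
rewrite (_ : (false%:R : int) = 0) // mulr0; apply: addr_ge0; apply: sumr_ge0 => a _; first apply: sumr_ge0 => d _;
  apply: mulr_ge0 => //; exact: sq_ge0.
Qed.
End LB.

Lemma Ham_eq (R : realType) (J lam h : R) L (e : site L -> int) :
  Ham J lam h e = J * ((Hint e + Vint e + Bint e)%:~R) - lam * (\sum_i e i ^+ 2)%:~R
                  - h * (\sum_i e i)%:~R.
Proof.
rewrite /Ham.
have -> : \sum_i \sum_(j | adj i j) ((e i - e j) ^+ 2)%:~R = (Aint e)%:~R :> R.
  by rewrite /Aint rmorph_sum; apply: eq_bigr => i _; rewrite rmorph_sum.
have -> : \sum_(i | inner_bd i) \sum_(q <- nbrs (pos i) | ~~ inLam L q) ((e i) ^+ 2)%:~R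
   = (Bint e)%:~R :> R.
  by rewrite /Bint rmorph_sum; apply: eq_bigr => i _; rewrite rmorph_sum.
rewrite (A_split e) rmorphM !rmorphD /=.
congr (_ - _ - _); last by rewrite rmorph_sum.
  rewrite (_ : (1%:~R + 1%:~R : R) = 2); last by rewrite -rmorphD.
  by field.
by rewrite rmorph_sum.

Qed.

Lemma Bint_split L (e : site L -> int) : Bint e =
  \sum_(i : site L) ((val i.2 == 0)%N + (val i.2 == L.-1)%N)%:R * e i ^+ 2
  + \sum_(i : site L) ((val i.1 == 0)%N + (val i.1 == L.-1)%N)%:R * e i ^+ 2.
Proof.
rewrite B_eq -big_split /=; apply: eq_bigr => i _.
rewrite nout_eq -mulrDl -natrD; congr (_%:R * _); by rewrite [RHS]addnC !addnA.
Qed.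

Lemma config_sq L (e : site L -> int) : is_config e ->
  \sum_i e i ^+ 2 = (#|[pred i | e i != 0]|)%:R.
Proof.
move=> hc; rewrite card_sum; apply: eq_bigr => i _ /=.
by move: (hc i); rewrite !inE => /or3P [] /eqP ->.
Qed.

Lemma config_sum L (e : site L -> int) : is_config e ->
  \sum_i e i = 2 * (n_plus e)%:R - (#|[pred i | e i != 0]|)%:R.
Proof.
move=> hc; rewrite /n_plus !card_sum mulr_sumr -sumrB; apply: eq_bigr => i _ /=.
by move: (hc i); rewrite !inE => /or3P [] /eqP ->.
Qed.

Lemma Hint_rows L (e : site L -> int) : Hint e =
  \sum_(a < L) \sum_(b < L) \sum_(d < L) (val d == (val b).+1)%:R * (e (a, b) - e (a, d)) ^+ 2.
Proof.
rewrite /Hint sum_site; apply: eq_bigr => a _.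
under eq_bigr => b _ do (rewrite sum_site; under eq_bigr => c _ do
  (under eq_bigr => d _ do rewrite /isR /= -mulnb natrM -mulrA; rewrite -mulr_sumr)).
by under eq_bigr => b _ do rewrite ind_val.
Qed.

Lemma Vint_cols L (e : site L -> int) : Vint e =
  \sum_(b < L) \sum_(a < L) \sum_(c < L) (val c == (val a).+1)%:R * (e (a, b) - e (c, b)) ^+ 2.
Proof.
rewrite /Vint sum_site exchange_big; apply: eq_bigr => b _; apply: eq_bigr => a _.
rewrite sum_site.
under eq_bigr => c _ do (under eq_bigr => d _ do rewrite /isD /= -mulnb natrM -mulrA; rewrite ind_val).
by [].
Qed.

Lemma N_le L (e : site L -> int) :
  (#|[pred i : site L | e i != 0]| <=
   #|[pred a : 'I_L | [exists b, e (a, b) != 0]]| * #|[pred b : 'I_L | [exists a, e (a, b) != 0]]|)%N.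
Proof.
rewrite -cardX; apply: subset_leq_card; apply/subsetP => -[a b]; rewrite !inE /= => nz.
by apply/andP; split; apply/existsP; [exists b | exists a].
Qed.

Definition zeta L (m : nat) : site L -> int :=
  fun i => if ((val i.1 < m.-1) && (val i.2 < m))%N then 1 else -1.
Arguments zeta : clear implicits.

Lemma zH_pt L m (a b d : 'I_L) :
  (val d == (val b).+1)%:R * (zeta L m (a, b) - zeta L m (a, d)) ^+ 2 <=
  (val d == m)%:R * ((val b == m.-1)%:R * (4 * (val a < m.-1)%:R)) :> int.
Proof.
rewrite /zeta /=; move: (val a) (val b) (val d) => x y w.
case: ifP => h1; case: ifP => h2; lia.
Qed.

Lemma zV_pt L m (a b c : 'I_L) :
  (val c == (val a).+1)%:R * (zeta L m (a, b) - zeta L m (c, b)) ^+ 2 <=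
  (val c == m.-1)%:R * ((val a == m.-2)%:R * (4 * (val b < m)%:R)) :> int.
Proof.
rewrite /zeta /=; move: (val a) (val b) (val c) => x y w.
case: ifP => h1; case: ifP => h2; lia.
Qed.

Lemma count_lt L k : \sum_(a < L) ((val a < k)%N)%:R = (minn k L)%:R :> int.
Proof.
elim: L => [|L IH]; first by rewrite big_ord0 minn0.
rewrite big_ord_recr /= IH -natrD; congr (_%:R).
case: (ltnP L k) => h /=; lia.
Qed.

Lemma ind_le1 L k (X : int) : 0 <= X -> \sum_(d < L) (val d == k)%:R * X <= X.
Proof.
move=> hX; rewrite (sum_ind L k (fun _ => X)).
by case: (k < L)%N; rewrite ?mul1r ?mul0r.
Qed.

Lemma ind_le1' L k : \sum_(d < L) (val d == k)%:R <= (1 : int).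
Proof.
have := ind_le1 L k (@ler01 int).
by under eq_bigr => d _ do rewrite mulr1.
Qed.

Lemma nat_ge0 (b : bool) : 0 <= (b%:R : int).
Proof. by case: b. Qed.

Lemma zeta_Hint L m : Hint (zeta L m) <= 4 * (m.-1)%:R.
Proof.
rewrite Hint_rows.
apply: le_trans (_ : \sum_(a < L) 4 * ((val a < m.-1)%N)%:R <= _); last first.
  rewrite -mulr_sumr count_lt ler_pM2l // ler_nat; lia.
apply: ler_sum => a _.
apply: le_trans (_ : \sum_(b < L) (val b == m.-1)%:R * (4 * ((val a < m.-1)%N)%:R) <= _); last first.
  apply: ind_le1; apply: mulr_ge0 => //; exact: nat_ge0.
apply: ler_sum => b _.
apply: le_trans (_ : \sum_(d < L) (val d == m)%:R * ((val b == m.-1)%:R * (4 * ((val a < m.-1)%N)%:R)) <= _).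
  apply: ler_sum => d _; exact: zH_pt.
apply: ind_le1; apply: mulr_ge0; first exact: nat_ge0.
apply: mulr_ge0 => //; exact: nat_ge0.
Qed.

Lemma zeta_Vint L m : Vint (zeta L m) <= 4 * m%:R.
Proof.
rewrite Vint_cols.
apply: le_trans (_ : \sum_(b < L) 4 * ((val b < m)%N)%:R <= _); last first.
  rewrite -mulr_sumr count_lt ler_pM2l // ler_nat; lia.
apply: ler_sum => b _.
apply: le_trans (_ : \sum_(a < L) (val a == m.-2)%:R * (4 * ((val b < m)%N)%:R) <= _); last first.
  apply: ind_le1; apply: mulr_ge0 => //; exact: nat_ge0.
apply: ler_sum => a _.
apply: le_trans (_ : \sum_(c < L) (val c == m.-1)%:R * ((val a == m.-2)%:R * (4 * ((val b < m)%N)%:R)) <= _).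
  apply: ler_sum => c _; exact: zV_pt.
apply: ind_le1; apply: mulr_ge0; first exact: nat_ge0.
apply: mulr_ge0 => //; exact: nat_ge0.
Qed.

Lemma zeta_sq L m i : zeta L m i ^+ 2 = 1.
Proof. by rewrite /zeta; case: ifP. Qed.

Lemma zeta_Bint L m : Bint (zeta L m) <= 4 * L%:R.
Proof.
rewrite Bint_split.
under eq_bigr => i _ do rewrite zeta_sq mulr1.
under [X in _ + X <= _]eq_bigr => i _ do rewrite zeta_sq mulr1.
rewrite !sum_site [X in _ + X <= _]exchange_big /=.
have H : forall (F : 'I_L -> 'I_L -> int),
   (forall a, \sum_(b < L) F a b <= 2) -> \sum_(a < L) \sum_(b < L) F a b <= 2 * L%:R.
  move=> F hF; apply: le_trans (_ : \sum_(a < L) (2 : int) <= _).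
    by apply: ler_sum => a _; exact: hF.
  by rewrite sumr_const card_ord mulr_natr.
have -> : 4 * (L%:R : int) = 2 * L%:R + 2 * L%:R by ring.
apply: lerD; apply: H => a; under eq_bigr => b _ do rewrite natrD;
  rewrite big_split /= (_ : (2 : int) = 1 + 1) //; apply: lerD; exact: ind_le1'.
Qed.
Lemma bil (R : realType) (x y Lr d J : R) : 0 <= x -> x <= Lr -> 0 <= y -> y <= Lr - 1 ->
  8 * J <= d * (Lr - 1) -> 0 <= J -> 0 < d ->
  d * Lr - 2 * J <= 2 * J * (x + y) - d * x * y + d * Lr ^+ 2 - 4 * J * Lr.
Proof.
move=> hx0 hx hy0 hy hd hJ dp.
set a := Lr - x. set b := Lr - 1 - y.
have ha : 0 <= a by rewrite /a; lra.
have hb : 0 <= b by rewrite /b; lra.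
suff key : 2 * J * (a + b) <= d * (a * (Lr - 1 - b) + b * Lr).
  rewrite /a /b in key; nra.
have hLb : b <= Lr - 1 by rewrite /b; lra.
have hLa : a <= Lr by rewrite /a; lra.
case: (lerP (2 * b) (Lr - 1)) => hc.
- have h1 : a * (Lr - 1) <= 2 * (a * (Lr - 1 - b)) by nra.
  have h2 : 8 * J * a <= d * (Lr - 1) * a by nra.
  have h3 : 8 * J * b <= d * (Lr - 1) * b by nra.
  nra.
- have h1 : Lr * (Lr - 1) <= 2 * (b * Lr) by nra.
  have h2 : 0 <= a * (Lr - 1 - b) by nra.
  have h3 : 8 * J * Lr <= d * (Lr - 1) * Lr by nra.
  nra.
Qed.
Lemma params (R : realType) (d h J Lr kr : R) : 0 < d -> 0 < h ->
  1 + d + d ^+ 2 * (1 / h + d / (2 * h) + 1) < J ->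
  (2 * J / d) ^+ 3 < Lr -> 0 <= kr -> kr <= (2 * J + d) / (2 * h) ->
  [/\ 8 * J <= d * (Lr - 1), J * (8 * kr + 6) < d * Lr & kr + 1 < Lr].
Proof.
move=> dp hp hJ hL hk0 hk.
set T := 1 / h + d / (2 * h) + 1 in hJ *.
have e1 : 0 <= 1 / h by rewrite divr_ge0 // ltW.
have e2 : 0 <= d / (2 * h) by rewrite divr_ge0 // ltW // mulr_gt0.
have hT1 : 1 <= T by rewrite /T; lra.
have hT0 : 0 < T by lra.
have e3 : 0 <= d ^+ 2 * T by apply: mulr_ge0; [apply: sqr_ge0 | lra].
have J1 : 1 <= J by lra.
have Jd : d < J by lra.
have JT : d ^+ 2 * T <= J by lra.
have hL' : 8 * J ^+ 3 < d ^+ 3 * Lr.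
  have E : 8 * J ^+ 3 = (2 * J / d) ^+ 3 * d ^+ 3.
    rewrite expr_div_n; field; lra.
  have d3 : 0 < d ^+ 3 by rewrite exprn_gt0.
  rewrite E; nra.
have A : 8 * J ^+ 2 * T < d * Lr.
  have : 8 * J ^+ 2 * (d ^+ 2 * T) <= 8 * J ^+ 3.
    rewrite (_ : 8 * J ^+ 3 = 8 * J ^+ 2 * J); last ring.
    rewrite ler_pM2l; first lra.
    by rewrite mulr_gt0 // exprn_gt0 //; lra.
  move=> h1.
  have : d ^+ 2 * (8 * J ^+ 2 * T) < d ^+ 2 * (d * Lr).
    rewrite (_ : d ^+ 2 * (8 * J ^+ 2 * T) = 8 * J ^+ 2 * (d ^+ 2 * T)); last ring.
    rewrite (_ : d ^+ 2 * (d * Lr) = d ^+ 3 * Lr); last ring.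
    lra.
  by rewrite ltr_pM2l ?exprn_gt0.
have hk' : 2 * h * kr <= 2 * J + d.
  by move: hk; rewrite ler_pdivlMr ?mulr_gt0 // mulrC.
have B : J * (8 * kr + 6) <= 8 * J ^+ 2 * T.
  rewrite -(ler_pM2l hp).
  have -> : h * (8 * J ^+ 2 * T) = 8 * J ^+ 2 + 4 * J ^+ 2 * d + 8 * h * J ^+ 2.
    rewrite /T; field; lra.
  have p1 : J * (2 * h * kr) <= J * (2 * J + d) by rewrite ler_pM2l //; lra.
  have p2 : J * d <= J ^+ 2 * d by rewrite ler_pM2r // expr2; nra.
  have p3 : h * J <= h * J ^+ 2 by rewrite ler_pM2l // expr2; nra.
  nra.
split.
- nra.
- lra.
- nra.
Qed.

Lemma cost_int L (e : site L -> int) :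
  2 * (#|[pred a : 'I_L | [exists b, e (a, b) != 0]]|)%:R +
  2 * (#|[pred b : 'I_L | [exists a, e (a, b) != 0]]|)%:R <= Hint e + Vint e + Bint e.
Proof.
have := Hcost e; have := Vcost e; rewrite Bint_split.
move: (\sum_(i : site L) _ * _) => S1.
move: (\sum_(i : site L) _ * _) => S2.
move=> h1 h2.
have -> : Hint e + Vint e + (S2 + S1) = (Hint e + S2) + (Vint e + S1) by ring.
exact: lerD.
Qed.

Lemma zeta_config L m : is_config (zeta L m).
Proof. by move=> i; rewrite /zeta; case: ifP. Qed.

Lemma zeta_nplus L m :
  (n_plus (zeta L m))%:R = ((minn m.-1 L * minn m L)%N)%:R :> int.
Proof.
rewrite /n_plus card_sum sum_site.
have pt : forall a b : 'I_L, (([pred i | zeta L m i == 1] : pred (site L)) (a, b))%:R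
   = ((val a < m.-1)%N)%:R * ((val b < m)%N)%:R :> int.
  by move=> a b; rewrite /= /zeta /=; case: (val a < m.-1)%N; case: (val b < m)%N.
under eq_bigr => a _ do (under eq_bigr => b _ do rewrite pt; rewrite -mulr_sumr).
by rewrite -mulr_suml !count_lt natrM.
Qed.

Lemma zeta_nz L m : #|[pred i : site L | zeta L m i != 0]| = (L * L)%N.
Proof.
rewrite eq_card_prod ?card_ord // => i; rewrite !inE /zeta; by case: ifP.
Qed.

Lemma card_excl n (P : pred 'I_n) (c : 'I_n) : ~~ P c -> (#|P| <= n.-1)%N.
Proof.
move=> nPc; rewrite -[n in n.-1]card_ord -(cardC1 c); apply: subset_leq_card.
by apply/subsetP => x; rewrite !inE /=; apply: contraTneq => ->.
Qed.

Lemma card_le n (P : pred 'I_n) : (#|P| <= n)%N.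
Proof. by rewrite -[n in (_ <= n)%N]card_ord max_card. Qed.

Lemma hnc_aux (k : nat) : (k%:Z + 1) * (k%:Z + 1 - 1) = (k.+1 * k)%N%:Z.
Proof. lia. Qed.

Lemma minn_aux (k L : nat) : (k.+1 < L)%N -> Posz (minn k L * minn k.+1 L) = Posz (k.+1 * k).
Proof. move=> h; congr Posz; rewrite (minn_idPl _) ?(minn_idPl _) 1?mulnC //; lia. Qed.

Theorem lemma4p9 (R : realType) (lam h : R) :
  0 < lam -> 0 < h -> lam / 2 < h -> h < lam ->
  exists J0 : R, forall (J : R) (L : nat), J0 < J -> cond_C J lam h L ->
    forall eta : site L -> int,
      in_M (n_c_plus J lam h) eta -> has_zero_line eta ->
      ~ is_minimizer J lam h (n_c_plus J lam h) eta.
Proof.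
move=> lp hp hl2 hl.
have dp : 0 < lam - h by rewrite subr_gt0.
exists (1 + (lam - h) + (lam - h) ^+ 2 * (1 / h + (lam - h) / (2 * h) + 1)).
move=> J L hJ [[_ _ hL] _] eta [hc hn] hz [_ hmin].
have Jp : 0 < J.
  have : 0 <= (lam - h) ^+ 2 * (1 / h + (lam - h) / (2 * h) + 1).
    apply: mulr_ge0; first exact: sqr_ge0.
    have : 0 <= 1 / h by rewrite divr_ge0 // ltW.
    have : 0 <= (lam - h) / (2 * h) by rewrite divr_ge0 // ltW // mulr_gt0.
    lra.
  lra.
have q0 : 0 <= (2 * J + lam - h) / (2 * h).
  rewrite divr_ge0 //; first lra.
  by rewrite ltW // mulr_gt0.
have [k hk] : exists k : nat, Num.floor ((2 * J + lam - h) / (2 * h)) = k%:Z.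
  move: (floor_ge0 ((2 * J + lam - h) / (2 * h))); rewrite q0.
  by case: (Num.floor _) => // n _; exists n.
have kq : (k%:R : R) <= (2 * J + (lam - h)) / (2 * h).
  by have := floor_le ((2 * J + lam - h) / (2 * h)); rewrite hk addrA.
have hnc : n_c_plus J lam h = (k.+1 * k)%N%:Z.
  by rewrite /n_c_plus /l_c hk; apply: hnc_aux.
have [F1 F2 F3] := params dp hp hJ hL (ler0n _ k) kq.
have Lk : (k.+1 < L)%N.
  by rewrite -(ltr_nat R) -addn1 natrD.
pose zt := zeta L k.+1.
have hzM : in_M (n_c_plus J lam h) zt.
  split; first exact: zeta_config.
  have E := zeta_nplus L k.+1; rewrite !natz in E.
  rewrite /zt E hnc /=.
  exact: minn_aux.
have Hle := hmin zt hzM.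
rewrite !Ham_eq in Hle.
have hP : n_plus zt = n_plus eta.
  by case: hzM => _ E; move: E; rewrite -hn => -[].
have cost := cost_int eta.
have Nxy := N_le eta.
rewrite (config_sq hc) (config_sum hc) in Hle.
rewrite (config_sq (@zeta_config L k.+1)) (config_sum (@zeta_config L k.+1)) in Hle.
rewrite -/zt zeta_nz hP in Hle.
have hzH := @zeta_Hint L k.+1; have hzV := @zeta_Vint L k.+1; have hzB := @zeta_Bint L k.+1.
rewrite -/zt in hzH hzV hzB.
have hzX : Hint zt + Vint zt + Bint zt <= 4 * k%:R + 4 * k.+1%:R + 4 * L%:R.
  by apply: lerD; [apply: lerD|].
clear hzH hzV hzB.
rewrite -(ler_int R) in cost. rewrite -(ler_int R) in hzX.
move: cost hzX Hle.
set XE := (Hint eta + Vint eta + Bint eta)%:~R.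
set XZ := (Hint zt + Vint zt + Bint zt)%:~R.
rewrite !(intrD, intrN, intrM, rmorph_nat) => cost hzX Hle.
rewrite -(ler_nat R) natrM in Nxy.
move: cost Nxy Hle hzX.
set x := #|[pred a : 'I_L | [exists b, eta (a, b) != 0]]|.
set y := #|[pred b : 'I_L | [exists a, eta (a, b) != 0]]|.
set N := #|[pred i : site L | eta i != 0]|.
have hx := card_le [pred a : 'I_L | [exists b, eta (a, b) != 0]].
have hy := card_le [pred b : 'I_L | [exists a, eta (a, b) != 0]].
move=> cost Nxy Hle hzX.
have i1 : (1%:~R : R) = 1 by [].
rewrite !i1 in cost Hle hzX.
rewrite natrM in Hle.
have hxr : (x%:R : R) <= L%:R by rewrite ler_nat.
have hyr : (y%:R : R) <= L%:R by rewrite ler_nat.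
have hP0 : 0 <= ((n_plus eta)%:R : R) by [].
have hN0 : 0 <= (N%:R : R) by [].
have hx0 : 0 <= (x%:R : R) by [].
have hy0 : 0 <= (y%:R : R) by [].
have hk0 : 0 <= (k%:R : R) by [].
have kS : (k.+1%:R : R) = k%:R + 1 by rewrite -addn1 natrD.
rewrite kS in hzX.
have key : forall xr yr : R, 0 <= xr -> 0 <= yr -> xr <= L%:R -> yr <= L%:R - 1 ->
    (lam - h) * L%:R - 2 * J <=
    2 * J * (xr + yr) - (lam - h) * xr * yr + (lam - h) * L%:R ^+ 2 - 4 * J * L%:R.
  move=> xr yr a1 a2 a3 a4; apply: bil => //; lra.
have main : (lam - h) * L%:R - 2 * J <=
    2 * J * (x%:R + y%:R) - (lam - h) * x%:R * y%:R + (lam - h) * L%:R ^+ 2 - 4 * J * L%:R.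
  case: hz => [[c hc0]|[r hr0]].
  - apply: key => //.
    have : (y <= L.-1)%N.
      apply: (@card_excl L _ c); rewrite /= negb_exists; apply/forallP => a.
      by rewrite hc0 eqxx.
    have L1 : (0 < L)%N := leq_ltn_trans (leq0n c) (ltn_ord c).
    by rewrite -(ler_nat R) => /le_trans; apply; rewrite -(subn1 L) natrB.
  - have : (x <= L.-1)%N.
      apply: (@card_excl L _ r); rewrite /= negb_exists; apply/forallP => b.
      by rewrite hr0 eqxx.
    have L1 : (0 < L)%N := leq_ltn_trans (leq0n r) (ltn_ord r).
    rewrite -(ler_nat R) => hxL.
    have hxL' : (x%:R : R) <= L%:R - 1 by apply: (le_trans hxL); rewrite -(subn1 L) natrB.
    have := key _ _ hy0 hx0 hyr hxL'.
    have -> : 2 * J * (y%:R + x%:R) - (lam - h) * y%:R * x%:R = 2 * J * (x%:R + y%:R) - (lam - h) * x%:R * y%:R by ring.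
    by [].
have p1 : J * (2 * x%:R + 2 * y%:R) <= J * XE by rewrite ler_pM2l.
have p2 : (lam - h) * N%:R <= (lam - h) * (x%:R * y%:R) by rewrite ler_pM2l.
have p3 : J * XZ <= J * (4 * k%:R + 4 * (k%:R + 1) + 4 * L%:R) by rewrite ler_pM2l.
nra.
Qed.
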